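(* Let $X$ be a Hausdorff, locally compact, arc connected space with at least two points, let $a\in X$, let $\mathcal I$ be an ideal on $X$, and let $\alpha$ be an infinite cardinal. Then $$\mathfrak P^\alpha_{\mathcal I}(X,a)=\{[f]: f:[0,1]\to X \text{ is an } \alpha\tfrac{\mathcal I}{}\text{loop with base point } a\},$$ i.e. the set of homotopy classes of $\alpha\frac{\mathcal I}{}$loops at $a$ is already a subgroup of $\pi_1(X,a)$.
   Context: A space is arc connected if any two distinct points $p,q$ are joined by a continuous injective map $h:[0,1]\to X$ with $h(0)=p$, $h(1)=q$. An ideal on a set $X$ is a nonempty family $\mathcal I$ of subsets of $X$ closed under finite unions and under taking subsets. For a nonzero cardinal $\alpha$ and an ideal $\mathcal I$ on $X$, a continuous map $f:Z\to X$ is an $\alpha\frac{\mathcal I}{}$map if there is $A\in\mathcal I$ such that for every $x\in X\setminus A$ one has $|f^{-1}(x)|\le\alpha$ when $\alpha$ is finite, and $|f^{-1}(x)|<\alpha$ when $\alpha$ is infinite. An $\alpha\frac{\mathcal I}{}$loop with base point $a$ is an $\alpha\frac{\mathcal I}{}$map $f:[0,1]\to X$ with $f(0)=f(1)=a$. $[f]$ denotes the homotopy class (rel endpoints) of a loop $f$, and $\mathfrak P^\alpha_{\mathcal I}(X,a)$ denotes the subgroup of $\pi_1(X,a)$ generated by the classes of all $\alpha\frac{\mathcal I}{}$loops with base point $a$. *)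

(* Defs.v *)
From Stdlib Require Import Reals Lra List Classical.
Open Scope R_scope.

Definition is_topology {X : Type} (op : (X -> Prop) -> Prop) : Prop :=
  (forall U V : X -> Prop, (forall x, U x <-> V x) -> op U -> op V) /\
  op (fun _ => True) /\
  (forall U V, op U -> op V -> op (fun x => U x /\ V x)) /\
  (forall F : (X -> Prop) -> Prop, (forall U, F U -> op U) ->
     op (fun x => exists U, F U /\ U x)).

Definition hausdorff {X : Type} (op : (X -> Prop) -> Prop) : Prop :=
  forall x y : X, x <> y -> exists U V, op U /\ op V /\ U x /\ V y /\
     (forall z, U z -> V z -> False).

Definition compact_set {X : Type} (op : (X -> Prop) -> Prop) (K : X -> Prop) : Prop :=
  forall F : (X -> Prop) -> Prop, (forall U, F U -> op U) ->
    (forall x, K x -> exists U, F U /\ U x) ->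
    exists l : list (X -> Prop), (forall U, In U l -> F U) /\
      (forall x, K x -> exists U, In U l /\ U x).

Definition locally_compact {X : Type} (op : (X -> Prop) -> Prop) : Prop :=
  forall x : X, exists U K, op U /\ U x /\ compact_set op K /\ (forall y, U y -> K y).

(* Maps [0,1] -> X are represented by functions R -> X; only their values on
   [0,1] matter.  Continuity is continuity of the restriction to [0,1]
   (Euclidean subspace topology), written out pointwise. *)
Definition in01 (t : R) : Prop := 0 <= t <= 1.

Definition cont01 {X : Type} (op : (X -> Prop) -> Prop) (f : R -> X) : Prop :=
  forall (U : X -> Prop) (t : R), op U -> in01 t -> U (f t) ->
    exists eps, eps > 0 /\
      forall s, in01 s -> Rabs (s - t) < eps -> U (f s).

Definition cont01x01 {X : Type} (op : (X -> Prop) -> Prop) (H : R -> R -> X) : Prop :=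
  forall (U : X -> Prop) (s t : R), op U -> in01 s -> in01 t -> U (H s t) ->
    exists eps, eps > 0 /\
      forall s' t', in01 s' -> in01 t' -> Rabs (s' - s) < eps -> Rabs (t' - t) < eps ->
        U (H s' t').

Definition arc_connected {X : Type} (op : (X -> Prop) -> Prop) : Prop :=
  forall p q : X, p <> q -> exists h : R -> X,
    cont01 op h /\
    (forall s t, in01 s -> in01 t -> h s = h t -> s = t) /\
    h 0 = p /\ h 1 = q.

Definition is_ideal {X : Type} (I : (X -> Prop) -> Prop) : Prop :=
  (exists A, I A) /\
  (forall A B, I A -> I B -> I (fun x => A x \/ B x)) /\
  (forall A B, I A -> (forall x, B x -> A x) -> I B).

(* A cardinal alpha is represented by a type [A] with |A| = alpha. *)
Definition finite_type (A : Type) : Prop := exists l : list A, forall a, In a l.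

Definition card_le {T : Type} (S : T -> Prop) (A : Type) : Prop :=
  exists g : {t : T | S t} -> A, forall u v, g u = g v -> u = v.

Definition card_lt {T : Type} (S : T -> Prop) (A : Type) : Prop :=
  card_le S A /\ ~ (exists h : A -> {t : T | S t}, forall u v, h u = h v -> u = v).

Definition card_bound {T : Type} (S : T -> Prop) (A : Type) : Prop :=
  (finite_type A -> card_le S A) /\ (~ finite_type A -> card_lt S A).

Definition fiber01 {X : Type} (f : R -> X) (x : X) : R -> Prop :=
  fun t => in01 t /\ f t = x.

Definition alpha_I_map {X : Type} (op : (X -> Prop) -> Prop) (I : (X -> Prop) -> Prop)
  (A : Type) (f : R -> X) : Prop :=
  cont01 op f /\
  exists B, I B /\ forall x, ~ B x -> card_bound (fiber01 f x) A.

Definition is_loop {X : Type} (op : (X -> Prop) -> Prop) (f : R -> X) (a : X) : Prop :=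
  cont01 op f /\ f 0 = a /\ f 1 = a.

Definition alpha_I_loop {X : Type} (op : (X -> Prop) -> Prop) (I : (X -> Prop) -> Prop)
  (A : Type) (f : R -> X) (a : X) : Prop :=
  alpha_I_map op I A f /\ f 0 = a /\ f 1 = a.

Definition path_homotopic {X : Type} (op : (X -> Prop) -> Prop) (f g : R -> X) : Prop :=
  exists H : R -> R -> X, cont01x01 op H /\
    (forall t, in01 t -> H 0 t = f t) /\
    (forall t, in01 t -> H 1 t = g t) /\
    (forall s, in01 s -> H s 0 = f 0) /\
    (forall s, in01 s -> H s 1 = f 1).

Definition path_concat {X : Type} (f g : R -> X) : R -> X :=
  fun t => if Rle_dec t (1/2) then f (2 * t) else g (2 * t - 1).

Definition path_rev {X : Type} (f : R -> X) : R -> X := fun t => f (1 - t).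

(* Loops whose class lies in the subgroup of pi_1(X,a) generated by the classes
   of alpha I-loops at a: the least set of loops containing the alpha I-loops
   and the constant loop, closed under concatenation, reversal and homotopy
   rel endpoints.  P^alpha_I(X,a) = { [g] | gen_loop g }. *)
Inductive gen_loop {X : Type} (op : (X -> Prop) -> Prop) (I : (X -> Prop) -> Prop)
  (A : Type) (a : X) : (R -> X) -> Prop :=
| gen_base : forall f, alpha_I_loop op I A f a -> gen_loop op I A a f
| gen_unit : gen_loop op I A a (fun _ => a)
| gen_mul : forall f g, gen_loop op I A a f -> gen_loop op I A a g ->
    gen_loop op I A a (path_concat f g)
| gen_inv : forall f, gen_loop op I A a f -> gen_loop op I A a (path_rev f)
| gen_homot : forall f g, gen_loop op I A a f -> is_loop op g a ->
    path_homotopic op f g -> gen_loop op I A a g.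

(* Submission.v *)
Require Import Defs.
From Stdlib Require Import Reals Lra Lia List Classical ClassicalEpsilon FunctionalExtensionality PropExtensionality ProofIrrelevance.

Definition inj (X Y : Type) : Prop := exists g : X -> Y, forall u v, g u = g v -> u = v.

Lemma inj_refl X : inj X X.
Proof. exists (fun x => x); auto. Qed.

Lemma inj_trans X Y Z : inj X Y -> inj Y Z -> inj X Z.
Proof. intros [g Hg] [h Hh]; exists (fun x => h (g x)); auto. Qed.

Lemma inj_sum X1 Y1 X2 Y2 : inj X1 Y1 -> inj X2 Y2 -> inj (X1 + X2) (Y1 + Y2).
Proof.
  intros [g Hg] [h Hh].
  exists (fun u => match u with inl x => inl (g x) | inr x => inr (h x) end).
  intros [u|u] [v|v] E; try discriminate; inversion E; f_equal; auto.
Qed.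

Lemma fin_inj X Y : inj X Y -> finite_type Y -> finite_type X.
Proof.
  intros [g Hg] [l Hl].
  assert (Hh : forall y, exists o : option X, forall x, g x = y -> o = Some x).
  { intro y. destruct (classic (exists x, g x = y)) as [[x Hx]|Hn].
    - exists (Some x). intros x' Hx'. f_equal. apply Hg. congruence.
    - exists None. intros x Hx. exfalso. eauto. }
  pose (h := fun y => proj1_sig (constructive_indefinite_description _ (Hh y))).
  assert (Hs : forall x, h (g x) = Some x).
  { intro x. unfold h. destruct (constructive_indefinite_description _ _) as [o Ho]. simpl. auto. }
  exists (flat_map (fun y => match h y with Some x => x :: nil | None => nil end) l).
  intro x. apply in_flat_map. exists (g x). split; auto. rewrite Hs. simpl; auto.
Qed.

Lemma fin_sum X Y : finite_type X -> finite_type Y -> finite_type (X + Y).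
Proof.
  intros [l1 H1] [l2 H2]. exists (map inl l1 ++ map inr l2).
  intros [x|y]; apply in_app_iff; [left|right]; apply in_map; auto.
Qed.

Lemma fin_bool : finite_type bool.
Proof. exists (true :: false :: nil). intros []; simpl; auto. Qed.

Fixpoint build {Z : Type} (pk : list Z -> Z) (n : nat) : list Z :=
  match n with O => nil | S n => pk (build pk n) :: build pk n end.

Lemma build_in {Z} (pk : list Z -> Z) m n : (m < n)%nat -> In (pk (build pk m)) (build pk n).
Proof.
  induction n; intros H. lia.
  simpl. destruct (Nat.eq_dec m n) as [->|Hne]. left; auto. right; apply IHn; lia.
Qed.

Lemma inf_nat Z : ~ finite_type Z -> inj nat Z.
Proof.
  intros HZ.
  assert (Hp : forall l : list Z, exists z, ~ In z l).
  { intro l. apply NNPP. intro Hn. apply HZ. exists l. intro a.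
    apply NNPP. intro Ha. apply Hn. eauto. }
  pose (pk := fun l => proj1_sig (constructive_indefinite_description _ (Hp l))).
  assert (Hpk : forall l, ~ In (pk l) l).
  { intro l. unfold pk. destruct (constructive_indefinite_description _ _); simpl; auto. }
  exists (fun n => pk (build pk n)).
  intros m n E. destruct (Nat.lt_total m n) as [H|[H|H]]; auto; exfalso.
  - apply (Hpk (build pk n)). rewrite <- E. apply build_in; auto.
  - apply (Hpk (build pk m)). rewrite E. apply build_in; auto.
Qed.

Definition incl {T} (S S' : T -> Prop) := forall x, S x -> S' x.
Definition bigU {T} (F : (T -> Prop) -> Prop) : T -> Prop := fun x => exists S, F S /\ S x.

Lemma set_ext {T} (S S' : T -> Prop) : incl S S' -> incl S' S -> S = S'.
Proof.
  intros H1 H2. apply functional_extensionality. intro x.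
  apply propositional_extensionality; split; auto.
Qed.

Inductive tower {T} (nx : (T -> Prop) -> (T -> Prop)) : (T -> Prop) -> Prop :=
| tw_next : forall S, tower nx S -> tower nx (nx S)
| tw_union : forall F, (forall S, F S -> tower nx S) -> tower nx (bigU F).

Section TowerSec.
Context {T : Type} (nx : (T -> Prop) -> (T -> Prop)) (Hinc : forall S, incl S (nx S)).

Definition extreme (C : T -> Prop) :=
  forall X, tower nx X -> incl X C -> ~ incl C X -> incl (nx X) C.

Lemma towerA C : extreme C -> forall X, tower nx X -> incl X C \/ incl (nx C) X.
Proof.
  intros HC X tX. induction tX as [Y tY IH | F HF IH].
  - destruct IH as [H|H].
    + destruct (classic (incl C Y)) as [H'|H'].
      * right. rewrite (set_ext _ _ H H'). intros x; auto.
      * left. apply HC; auto.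
    + right. intros x Hx. apply Hinc. auto.
  - destruct (classic (forall S, F S -> incl S C)) as [H|H].
    + left. intros x [S [HS Sx]]. eapply H; eauto.
    + apply not_all_ex_not in H. destruct H as [S HS].
      apply imply_to_and in HS. destruct HS as [HS HS'].
      destruct (IH S HS) as [H|H]; [contradiction|].
      right. intros x Hx. exists S; auto.
Qed.

Lemma towerB C : tower nx C -> extreme C.
Proof.
  intros tC. induction tC as [C tC IH | F HF IH].
  - intros X tX h1 h2.
    destruct (towerA C IH X tX) as [H|H]; [|contradiction].
    destruct (classic (incl C X)) as [H'|H'].
    + rewrite (set_ext _ _ H H'). intros x; auto.
    + intros x Hx. apply Hinc. apply (IH X tX H H'). auto.
  - intros X tX h1 h2.
    destruct (classic (exists C, F C /\ incl X C)) as [[C [FC HXC]]|Hn].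
    + destruct (classic (incl C X)) as [HCX|HCX].
      * assert (Hy : exists y, bigU F y /\ ~ X y).
        { apply NNPP. intro Hn. apply h2. intros y Hy. apply NNPP. intro. eauto. }
        destruct Hy as [y [[D [FD Dy]] nXy]].
        assert (EX : X = C) by (apply set_ext; auto). subst X.
        destruct (towerA C (IH C FC) D (HF D FD)) as [H|H].
        -- exfalso. auto.
        -- intros x Hx. exists D. auto.
      * intros x Hx. exists C. split; auto. apply (IH C FC X tX HXC HCX). auto.
    + exfalso. apply h2. intros x [C [FC Cx]].
      destruct (towerA C (IH C FC) X tX) as [H|H].
      * exfalso. eauto.
      * apply H. apply Hinc. auto.
Qed.

Lemma tower_chain X Y : tower nx X -> tower nx Y -> incl X Y \/ incl Y X.
Proof.
  intros tX tY. destruct (towerA Y (towerB Y tY) X tX) as [H|H]; auto.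
  right. intros x Hx. apply H, Hinc; auto.
Qed.
End TowerSec.

Lemma zorn {T} (P : (T -> Prop) -> Prop) :
  (forall F, (forall S, F S -> P S) ->
     (forall S S', F S -> F S' -> incl S S' \/ incl S' S) -> P (bigU F)) ->
  exists M, P M /\ forall S, P S -> incl M S -> incl S M.
Proof.
  intros Hch. apply NNPP. intro Hno.
  assert (Hex : forall M, exists S, incl M S /\ (P M -> P S /\ ~ incl S M)).
  { intro M. destruct (classic (P M)) as [HP|HP].
    - apply NNPP. intro Hn. apply Hno. exists M. split; auto.
      intros S PS MS. apply NNPP. intro nSM. apply Hn. exists S. auto.
    - exists M. split. intros x; auto. intro; contradiction. }
  pose (nx := fun M => proj1_sig (constructive_indefinite_description _ (Hex M))).
  assert (Hnx : forall M, incl M (nx M) /\ (P M -> P (nx M) /\ ~ incl (nx M) M)).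
  { intro M. unfold nx. destruct (constructive_indefinite_description _ _); simpl; auto. }
  assert (Hinc : forall M, incl M (nx M)) by (intro M; apply Hnx).
  assert (HP : forall S, tower nx S -> P S).
  { intros S tS. induction tS as [S tS IH | F HF IH].
    - apply Hnx; auto.
    - apply Hch; auto. intros. apply (tower_chain nx Hinc); auto. }
  pose (U := bigU (tower nx)).
  assert (tU : tower nx U) by (apply tw_union; auto).
  destruct (Hnx U) as [_ H]. destruct (H (HP U tU)) as [_ H'].
  apply H'. intros x Hx. exists (nx U). split; auto. apply tw_next; auto.
Qed.

Lemma compar X Y : inj X Y \/ inj Y X.
Proof.
  pose (P := fun R : X * Y -> Prop =>
    (forall x y y', R (x,y) -> R (x,y') -> y = y') /\
    (forall x x' y, R (x,y) -> R (x',y) -> x = x')).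
  destruct (zorn P) as [M [[PM1 PM2] Mmax]].
  { intros F HF Hc. split.
    - intros x y y' [S [FS Sy]] [S' [FS' Sy']].
      destruct (Hc S S' FS FS') as [H|H].
      + apply (proj1 (HF S' FS') x); auto.
      + apply (proj1 (HF S FS) x); auto.
    - intros x x' y [S [FS Sy]] [S' [FS' Sy']].
      destruct (Hc S S' FS FS') as [H|H].
      + apply (proj2 (HF S' FS') x x' y); auto.
      + apply (proj2 (HF S FS) x x' y); auto. }
  destruct (classic (forall x, exists y, M (x,y))) as [Hx|Hx].
  { left. exists (fun x => proj1_sig (constructive_indefinite_description _ (Hx x))).
    intros u v E.
    destruct (constructive_indefinite_description _ (Hx u)) as [yu Hu].
    destruct (constructive_indefinite_description _ (Hx v)) as [yv Hv].
    simpl in E. subst. eapply PM2; eauto. }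
  destruct (classic (forall y, exists x, M (x,y))) as [Hy|Hy].
  { right. exists (fun y => proj1_sig (constructive_indefinite_description _ (Hy y))).
    intros u v E.
    destruct (constructive_indefinite_description _ (Hy u)) as [xu Hu].
    destruct (constructive_indefinite_description _ (Hy v)) as [xv Hv].
    simpl in E. subst. eapply PM1; eauto. }
  exfalso.
  apply not_all_ex_not in Hx. destruct Hx as [x0 Hx0].
  apply not_all_ex_not in Hy. destruct Hy as [y0 Hy0].
  pose (M' := fun p => M p \/ p = (x0,y0)).
  assert (PM' : P M').
  { split.
    - intros x y y' [H|H] [H'|H'].
      + eauto.
      + inversion H'; subst. exfalso. eauto.
      + inversion H; subst. exfalso. eauto.
      + inversion H; inversion H'; subst; auto.
    - intros x x' y [H|H] [H'|H'].
      + eauto.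
      + inversion H'; subst. exfalso. eauto.
      + inversion H; subst. exfalso. eauto.
      + inversion H; inversion H'; subst; auto. }
  assert (HM : Submission.incl M M') by (intros p Hp; left; auto).
  pose proof (Mmax M' PM' HM (x0,y0) (or_intror eq_refl)). eauto.
Qed.

Lemma fin_into_inf X Y : finite_type X -> ~ finite_type Y -> inj X Y.
Proof.
  intros HX HY. destruct (compar X Y) as [H|H]; auto.
  exfalso. apply HY. eapply fin_inj; eauto.
Qed.

Lemma eq_2nb n n' b b' : (2 * n + Nat.b2n b = 2 * n' + Nat.b2n b')%nat -> n = n' /\ b = b'.
Proof. destruct b, b'; simpl; intros; split; try lia; auto. Qed.

Lemma sig_eq {T} (P : T -> Prop) (u v : {x | P x}) : proj1_sig u = proj1_sig v -> u = v.
Proof.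
  destruct u as [u pu], v as [v pv]; simpl; intros ->. f_equal. apply proof_irrelevance.
Qed.

Lemma absorb Y : ~ finite_type Y -> inj (Y + Y) Y.
Proof.
  intros HY.
  pose (P := fun R : (Y * bool) * Y -> Prop =>
    (forall p y y', R (p,y) -> R (p,y') -> y = y') /\
    (forall p p' y, R (p,y) -> R (p',y) -> p = p') /\
    (forall d b b' y, R ((d,b),y) -> exists y', R ((d,b'),y')) /\
    (forall p y, R (p,y) -> exists b y', R ((y,b),y')) /\
    (forall d b y, R ((d,b),y) -> exists p, R (p,d))).
  destruct (zorn P) as [M [[P1 [P2 [P3 [P4 P5]]]] Mmax]].
  { intros F HF Hc. split; [|split; [|split; [|split]]].
    - intros p y y' [S [FS Sy]] [S' [FS' Sy']].
      destruct (Hc S S' FS FS') as [H|H].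
      + apply (proj1 (HF S' FS') p); auto.
      + apply (proj1 (HF S FS) p); auto.
    - intros p p' y [S [FS Sy]] [S' [FS' Sy']].
      destruct (Hc S S' FS FS') as [H|H].
      + apply (proj1 (proj2 (HF S' FS')) p p' y); auto.
      + apply (proj1 (proj2 (HF S FS)) p p' y); auto.
    - intros d b b' y [S [FS Sy]].
      destruct (proj1 (proj2 (proj2 (HF S FS))) d b b' y Sy) as [y' Hy'].
      exists y'; exists S; auto.
    - intros p y [S [FS Sy]].
      destruct (proj1 (proj2 (proj2 (proj2 (HF S FS)))) p y Sy) as [b [y' Hy']].
      exists b, y'; exists S; auto.
    - intros d b y [S [FS Sy]].
      destruct (proj2 (proj2 (proj2 (proj2 (HF S FS)))) d b y Sy) as [p Hp].
      exists p; exists S; auto. }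
  pose (D := fun x => exists b y, M ((x,b),y)).
  assert (HE : finite_type {x | ~ D x}).
  { apply NNPP. intro HinfE. destruct (inf_nat _ HinfE) as [e He].
    pose (e' := fun n => proj1_sig (e n)).
    assert (He' : forall m n, e' m = e' n -> m = n).
    { intros m n E. apply He. apply sig_eq. auto. }
    assert (HnD : forall n, ~ D (e' n)) by (intro n; unfold e'; destruct (e n); auto).
    pose (M' := fun q => M q \/ exists n (b : bool), q = ((e' n, b), e' (2 * n + Nat.b2n b)%nat)).
    assert (PM' : P M').
    { split; [|split; [|split; [|split]]].
      - intros p y y' [H|[n [b H]]] [H'|[n' [b' H']]].
        + eauto.
        + inversion H'; subst. exfalso. apply (HnD n'). exists b', y; auto.
        + inversion H; subst. exfalso. apply (HnD n). exists b, y'; auto.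
        + apply pair_equal_spec in H as [Hp Hy]; apply pair_equal_spec in H' as [Hp' Hy'].
          rewrite Hp in Hp'. apply pair_equal_spec in Hp' as [E1 E2].
          apply He' in E1. subst. auto.
      - intros p p' y [H|[n [b H]]] [H'|[n' [b' H']]].
        + eauto.
        + inversion H'; subst. exfalso. destruct (P4 _ _ H) as [b0 [y0 Hy0]].
          apply (HnD (2 * n' + Nat.b2n b')%nat). exists b0, y0; auto.
        + inversion H; subst. exfalso. destruct (P4 _ _ H') as [b0 [y0 Hy0]].
          apply (HnD (2 * n + Nat.b2n b)%nat). exists b0, y0; auto.
        + apply pair_equal_spec in H as [Hp Hy]; apply pair_equal_spec in H' as [Hp' Hy'].
          rewrite Hy in Hy'. apply He' in Hy'.
          destruct (eq_2nb _ _ _ _ Hy'); subst; auto.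
      - intros d b b' y [H|[n [b0 H]]].
        + destruct (P3 _ _ b' _ H) as [y' Hy']. exists y'; left; auto.
        + inversion H; subst. exists (e' (2 * n + Nat.b2n b')%nat). right. exists n, b'. auto.
      - intros p y [H|[n [b0 H]]].
        + destruct (P4 _ _ H) as [b [y' Hy']]. exists b, y'; left; auto.
        + inversion H; subst. exists true, (e' (2 * (2 * n + Nat.b2n b0) + 1)%nat).
          right. exists (2 * n + Nat.b2n b0)%nat, true. auto.
      - intros d b y [H|[n [b0 H]]].
        + destruct (P5 _ _ _ H) as [p Hp]. exists p; left; auto.
        + inversion H; subst.
          exists (e' (Nat.div2 n), Nat.odd n). right. exists (Nat.div2 n), (Nat.odd n).
          rewrite <- Nat.div2_odd. auto. }
    assert (HM : Submission.incl M M') by (intros q Hq; left; auto).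
    pose proof (Mmax M' PM' HM ((e' 0%nat, true), e' 1%nat)) as Hq.
    apply (HnD 0%nat). exists true, (e' 1%nat). apply Hq. right. exists 0%nat, true. auto. }
  assert (HYD : inj Y ({x | D x} + {x | ~ D x})).
  { exists (fun y => match excluded_middle_informative (D y) with
                     | left h => inl (exist _ y h) | right h => inr (exist _ y h) end).
    intros u v.
    destruct (excluded_middle_informative (D u)), (excluded_middle_informative (D v));
      intro E; inversion E; auto. }
  assert (HDinf : ~ finite_type {x | D x}).
  { intro HD. apply HY. eapply fin_inj; eauto. apply fin_sum; auto. }
  assert (HED : inj {x | ~ D x} {x | D x}) by (apply fin_into_inf; auto).
  assert (HDD : inj ({x | D x} + {x | D x}) {x | D x}).
  { assert (Hk : forall u : {x | D x} + {x | D x}, exists y : {x | D x},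
        match u with inl d => M ((proj1_sig d, false), proj1_sig y)
                   | inr d => M ((proj1_sig d, true), proj1_sig y) end).
    { intros [[d [b [y Hd]]]|[d [b [y Hd]]]]; simpl.
      - destruct (P3 _ _ false _ Hd) as [y' Hy'].
        destruct (P4 _ _ Hy') as [b1 [y1 H1]].
        exists (exist _ y' (ex_intro _ b1 (ex_intro _ y1 H1))). simpl. auto.
      - destruct (P3 _ _ true _ Hd) as [y' Hy'].
        destruct (P4 _ _ Hy') as [b1 [y1 H1]].
        exists (exist _ y' (ex_intro _ b1 (ex_intro _ y1 H1))). simpl. auto. }
    exists (fun u => proj1_sig (constructive_indefinite_description _ (Hk u))).
    intros u v E.
    destruct (constructive_indefinite_description _ (Hk u)) as [yu Hu].
    destruct (constructive_indefinite_description _ (Hk v)) as [yv Hv].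
    simpl in E. subst yv.
    destruct u as [du|du], v as [dv|dv];
      pose proof (P2 _ _ _ Hu Hv) as Hp; inversion Hp; try f_equal; apply sig_eq; auto. }
  assert (HYDt : inj Y {x | D x}).
  { eapply inj_trans. apply HYD. eapply inj_trans; [|apply HDD].
    apply inj_sum; auto. apply inj_refl. }
  assert (HDY : inj {x | D x} Y) by (exists (@proj1_sig _ _); intros; apply sig_eq; auto).
  eapply inj_trans. apply inj_sum; apply HYDt. eapply inj_trans. apply HDD. auto.
Qed.

Lemma card_core Z Y1 Y2 A : inj Z (Y1 + Y2) -> inj Y1 A -> inj Y2 A ->
  ~ inj A Y1 -> ~ inj A Y2 -> ~ finite_type A -> inj Z A /\ ~ inj A Z.
Proof.
  intros HZ H1 H2 N1 N2 HA.
  assert (gen : forall Y, inj Z (Y + Y) -> inj Y A -> ~ inj A Y -> inj Z A /\ ~ inj A Z).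
  { intros Y HZY HYA NAY. destruct (classic (finite_type Y)) as [HF|HF].
    - assert (FZ : finite_type Z) by (eapply fin_inj; eauto; apply fin_sum; auto).
      split. apply fin_into_inf; auto. intro HAZ. apply HA. eapply fin_inj; eauto.
    - assert (HZY' : inj Z Y) by (eapply inj_trans; eauto; apply absorb; auto).
      split. eapply inj_trans; eauto. intro HAZ. apply NAY. eapply inj_trans; eauto. }
  destruct (compar Y1 Y2) as [H|H].
  - apply (gen Y2); auto. eapply inj_trans; eauto. apply inj_sum; auto. apply inj_refl.
  - apply (gen Y1); auto. eapply inj_trans; eauto. apply inj_sum; auto. apply inj_refl.
Qed.
Open Scope R_scope.
Open Scope R_scope.

Lemma abs_lt x a : Rabs x < a -> - a < x < a.
Proof. unfold Rabs; destruct (Rcase_abs x); lra. Qed.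

Section T.
Context {X : Type} (op : (X -> Prop) -> Prop).

Lemma swap_cont H : cont01x01 op H -> cont01x01 op (fun s t => H t s).
Proof.
  intros HH U s t HU hs ht Hu. destruct (HH U t s HU ht hs Hu) as [e [he He]].
  exists e; split; [auto|]. intros s' t' h1 h2 h3 h4. apply He; auto.
Qed.

Lemma lift1 f : cont01 op f -> cont01x01 op (fun _ t => f t).
Proof.
  intros Hf U s t HU hs ht Hu. destruct (Hf U t HU ht Hu) as [e [he He]].
  exists e; split; auto.
Qed.

Lemma drop1 f : cont01x01 op (fun _ t => f t) -> cont01 op f.
Proof.
  intros Hf U t HU ht Hu.
  assert (h0 : in01 0) by (unfold in01; lra).
  destruct (Hf U 0 t HU h0 ht Hu) as [e [he He]].
  exists e; split; auto. intros s hs hst. apply (He 0 s); auto.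
  rewrite Rminus_0_r, Rabs_R0; auto.
Qed.

Lemma glue_t H K1 K2 : cont01x01 op K1 -> cont01x01 op K2 ->
  (forall s t, in01 s -> in01 t -> t <= 1/2 -> H s t = K1 s t) ->
  (forall s t, in01 s -> in01 t -> 1/2 <= t -> H s t = K2 s t) ->
  cont01x01 op H.
Proof.
  intros C1 C2 E1 E2 U s t HU hs ht Hu.
  destruct (Rlt_le_dec t (1/2)) as [Hlt|Hge].
  - rewrite E1 in Hu by (auto; lra).
    destruct (C1 U s t HU hs ht Hu) as [e [he He]].
    exists (Rmin e (1/2 - t)). split. apply Rmin_pos; lra.
    intros s' t' h1 h2 h3 h4.
    pose proof (Rmin_l e (1/2 - t)); pose proof (Rmin_r e (1/2 - t)).
    assert (t' <= 1/2) by (apply abs_lt in h4; lra).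
    rewrite E1 by auto. apply He; auto; lra.
  - destruct (Rlt_le_dec (1/2) t) as [Hgt|Hle].
    + rewrite E2 in Hu by (auto; lra).
      destruct (C2 U s t HU hs ht Hu) as [e [he He]].
      exists (Rmin e (t - 1/2)). split. apply Rmin_pos; lra.
      intros s' t' h1 h2 h3 h4.
      pose proof (Rmin_l e (t - 1/2)); pose proof (Rmin_r e (t - 1/2)).
      assert (1/2 <= t') by (apply abs_lt in h4; lra).
      rewrite E2 by auto. apply He; auto; lra.
    + assert (Hu1 : U (K1 s t)) by (rewrite <- E1; auto; lra).
      assert (Hu2 : U (K2 s t)) by (rewrite <- E2; auto; lra).
      destruct (C1 U s t HU hs ht Hu1) as [e1 [he1 He1]].
      destruct (C2 U s t HU hs ht Hu2) as [e2 [he2 He2]].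
      exists (Rmin e1 e2). split. apply Rmin_pos; lra.
      intros s' t' h1 h2 h3 h4.
      pose proof (Rmin_l e1 e2); pose proof (Rmin_r e1 e2).
      destruct (Rle_dec t' (1/2)).
      * rewrite E1 by auto. apply He1; auto; lra.
      * rewrite E2 by (auto; lra). apply He2; auto; lra.
Qed.

Lemma glue_s H K1 K2 : cont01x01 op K1 -> cont01x01 op K2 ->
  (forall s t, in01 s -> in01 t -> s <= 1/2 -> H s t = K1 s t) ->
  (forall s t, in01 s -> in01 t -> 1/2 <= s -> H s t = K2 s t) ->
  cont01x01 op H.
Proof.
  intros C1 C2 E1 E2.
  apply swap_cont with (H := fun s t => H t s).
  apply glue_t with (K1 := fun s t => K1 t s) (K2 := fun s t => K2 t s).
  - apply swap_cont; auto.
  - apply swap_cont; auto.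
  - intros; apply E1; auto.
  - intros; apply E2; auto.
Qed.

Definition rc2 (p : R -> R -> R) : Prop :=
  (forall s t, in01 s -> in01 t -> in01 (p s t)) /\
  forall s t, in01 s -> in01 t -> forall e, e > 0 -> exists d, d > 0 /\
    forall s' t', in01 s' -> in01 t' -> Rabs (s' - s) < d -> Rabs (t' - t) < d ->
      Rabs (p s' t' - p s t) < e.

Lemma comp_cont H p q : cont01x01 op H -> rc2 p -> rc2 q ->
  cont01x01 op (fun s t => H (p s t) (q s t)).
Proof.
  intros HH [p01 pc] [q01 qc] U s t HU hs ht Hu.
  destruct (HH U (p s t) (q s t) HU (p01 s t hs ht) (q01 s t hs ht) Hu) as [e [he He]].
  destruct (pc s t hs ht e he) as [d1 [hd1 Hd1]].
  destruct (qc s t hs ht e he) as [d2 [hd2 Hd2]].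
  exists (Rmin d1 d2). split. apply Rmin_pos; lra.
  intros s' t' h1 h2 h3 h4.
  pose proof (Rmin_l d1 d2); pose proof (Rmin_r d1 d2).
  apply He; auto. apply Hd1; auto; lra. apply Hd2; auto; lra.
Qed.

Lemma comp1_cont f q : cont01 op f -> rc2 q -> cont01x01 op (fun s t => f (q s t)).
Proof.
  intros Hf Hq.
  apply (comp_cont (fun _ t => f t) (fun s t => s) q); auto.
  apply lift1; auto.
  split; auto. intros s t hs ht e he. exists e; split; auto.
Qed.
End T.

Lemma lip_rc2 p L : L > 0 -> (forall s t, in01 s -> in01 t -> in01 (p s t)) ->
  (forall s t s' t', in01 s -> in01 t -> in01 s' -> in01 t' ->
     Rabs (p s' t' - p s t) <= L * (Rabs (s' - s) + Rabs (t' - t))) -> rc2 p.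
Proof.
  intros hL h01 hl. split; auto.
  intros s t hs ht e he. exists (e / (2 * L)). split.
  apply Rdiv_lt_0_compat; lra.
  intros s' t' h1 h2 h3 h4.
  eapply Rle_lt_trans. apply hl; auto.
  apply Rlt_le_trans with (L * (e / (2 * L) + e / (2 * L))).
  apply Rmult_lt_compat_l; lra.
  right. field. lra.
Qed.
Open Scope R_scope.

Ltac piece := unfold Rmin, Rmax, Rabs in *;
  repeat (match goal with
          | |- context [Rle_dec ?a ?b] => destruct (Rle_dec a b)
          | |- context [Rcase_abs ?a] => destruct (Rcase_abs a)
          | H : context [Rle_dec ?a ?b] |- _ => destruct (Rle_dec a b)
          | H : context [Rcase_abs ?a] |- _ => destruct (Rcase_abs a)
          end); unfold in01 in *; lra.

Lemma rc_s : rc2 (fun s t => s).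
Proof. apply lip_rc2 with 1; auto. lra. intros; piece. Qed.
Lemma rc_t : rc2 (fun s t => t).
Proof. apply lip_rc2 with 1; auto. lra. intros; piece. Qed.
Lemma rc_mint : rc2 (fun s t => Rmin (2*t) 1).
Proof. apply lip_rc2 with 2. lra. intros; piece. intros; piece. Qed.
Lemma rc_maxt : rc2 (fun s t => Rmax (2*t-1) 0).
Proof. apply lip_rc2 with 2. lra. intros; piece. intros; piece. Qed.
Lemma rc_mins : rc2 (fun s t => Rmin (2*s) 1).
Proof. apply lip_rc2 with 2. lra. intros; piece. intros; piece. Qed.
Lemma rc_maxs : rc2 (fun s t => Rmax (2*s-1) 0).
Proof. apply lip_rc2 with 2. lra. intros; piece. intros; piece. Qed.
Lemma rc_rev : rc2 (fun s t => 1 - t).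
Proof. apply lip_rc2 with 1. lra. intros; piece. intros; piece. Qed.

Definition phi (t : R) := 1 - Rabs (2*t - 1).


Lemma phi_in t : in01 t -> in01 (phi t).
Proof. unfold phi; intros; piece. Qed.

Lemma rc_unit : rc2 (fun s t => (1 - s) * phi t).
Proof.
  apply lip_rc2 with 2. lra.
  - intros s t hs ht. pose proof (phi_in t ht). unfold in01 in *.
    split; [apply Rmult_le_pos|]; try lra.
    replace 1 with (1 * 1) by ring. apply Rmult_le_compat; lra.
  - intros s t s' t' hs ht hs' ht'.
    pose proof (phi_in t ht). pose proof (phi_in t' ht').
    assert (Hp : Rabs (phi t' - phi t) <= 2 * Rabs (t' - t)) by (unfold phi; piece).
    replace ((1 - s') * phi t' - (1 - s) * phi t) with
      ((1 - s') * (phi t' - phi t) + (s - s') * phi t) by ring.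
    eapply Rle_trans. apply Rabs_triang. rewrite !Rabs_mult.
    assert (Rabs (1 - s') <= 1) by piece.
    assert (Rabs (phi t) <= 1) by piece.
    assert (Rabs (s - s') = Rabs (s' - s)) by piece.
    assert (0 <= Rabs (phi t' - phi t)) by apply Rabs_pos.
    assert (0 <= Rabs (s' - s)) by apply Rabs_pos.
    assert (Rabs (1 - s') * Rabs (phi t' - phi t) <= Rabs (phi t' - phi t)).
    { rewrite <- (Rmult_1_l (Rabs (phi t' - phi t))) at 2.
      apply Rmult_le_compat_r; auto. }
    assert (Rabs (s - s') * Rabs (phi t) <= Rabs (s' - s)).
    { rewrite H3. rewrite <- (Rmult_1_r (Rabs (s' - s))) at 2.
      apply Rmult_le_compat_l; auto. }
    lra.
Qed.

Section Main.
Context {X : Type} (op : (X -> Prop) -> Prop).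

Lemma hrefl f : cont01 op f -> path_homotopic op f f.
Proof.
  intros Hf. exists (fun _ t => f t). repeat split; auto. apply lift1; auto.
Qed.

Lemma htrans f g h : path_homotopic op f g -> path_homotopic op g h -> path_homotopic op f h.
Proof.
  intros [H1 [C1 [A1 [B1 [D1 E1]]]]] [H2 [C2 [A2 [B2 [D2 E2]]]]].
  exists (fun s t => if Rle_dec s (1/2) then H1 (2*s) t else H2 (2*s-1) t).
  assert (h0 : in01 0) by (unfold in01; lra). assert (h1 : in01 1) by (unfold in01; lra).
  split; [|split; [|split; [|split]]].
  - apply glue_s with (K1 := fun s t => H1 (Rmin (2*s) 1) t) (K2 := fun s t => H2 (Rmax (2*s-1) 0) t).
    + apply (comp_cont op H1 _ _ C1 rc_mins rc_t).
    + apply (comp_cont op H2 _ _ C2 rc_maxs rc_t).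
    + intros s t hs ht hle. destruct (Rle_dec s (1/2)); [|lra].
      f_equal. piece.
    + intros s t hs ht hge. destruct (Rle_dec s (1/2)).
      * assert (s = 1/2) by lra. subst.
        replace (2 * (1/2)) with 1 by field. replace (Rmin 1 1) with 1 by piece.
        replace (Rmax (1 - 1) 0) with 0 by piece. rewrite B1, A2; auto.
      * f_equal. piece.
  - intros t ht. destruct (Rle_dec 0 (1/2)); [|lra]. rewrite Rmult_0_r. auto.
  - intros t ht. destruct (Rle_dec 1 (1/2)); [lra|].
    replace (2 * 1 - 1) with 1 by ring. auto.
  - intros s hs. destruct (Rle_dec s (1/2)).
    + apply D1. unfold in01 in *; lra.
    + rewrite D2 by (unfold in01 in *; lra). rewrite <- (B1 0 h0). auto.
  - intros s hs. destruct (Rle_dec s (1/2)).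
    + apply E1. unfold in01 in *; lra.
    + rewrite E2 by (unfold in01 in *; lra). rewrite <- (B1 1 h1). auto.
Qed.

Lemma hrev f g : path_homotopic op f g -> path_homotopic op (path_rev f) (path_rev g).
Proof.
  intros [H [C [A0 [B0 [D0 E0]]]]].
  exists (fun s t => H s (1 - t)). unfold path_rev.
  split; [|split; [|split; [|split]]].
  - apply (comp_cont op H _ _ C rc_s rc_rev).
  - intros t ht. apply A0. unfold in01 in *; lra.
  - intros t ht. apply B0. unfold in01 in *; lra.
  - intros s hs. rewrite Rminus_0_r. auto.
  - intros s hs. replace (1 - 1) with 0 by ring. auto.
Qed.

Lemma cont_rev f : cont01 op f -> cont01 op (path_rev f).
Proof.
  intros Hf. apply drop1. apply (comp1_cont op f _ Hf rc_rev).
Qed.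

Lemma hconcat f1 g1 f2 g2 : f1 1 = f2 0 ->
  path_homotopic op f1 g1 -> path_homotopic op f2 g2 ->
  path_homotopic op (path_concat f1 f2) (path_concat g1 g2).
Proof.
  intros Ef [H1 [C1 [A1 [B1 [D1 E1]]]]] [H2 [C2 [A2 [B2 [D2 E2]]]]].
  assert (h0 : in01 0) by (unfold in01; lra). assert (h1 : in01 1) by (unfold in01; lra).
  exists (fun s t => path_concat (H1 s) (H2 s) t). unfold path_concat.
  split; [|split; [|split; [|split]]].
  - apply glue_t with (K1 := fun s t => H1 s (Rmin (2*t) 1)) (K2 := fun s t => H2 s (Rmax (2*t-1) 0)).
    + apply (comp_cont op H1 _ _ C1 rc_s rc_mint).
    + apply (comp_cont op H2 _ _ C2 rc_s rc_maxt).
    + intros s t hs ht hle. destruct (Rle_dec t (1/2)); [|lra].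
      f_equal. piece.
    + intros s t hs ht hge. destruct (Rle_dec t (1/2)).
      * assert (t = 1/2) by lra. subst.
        replace (2 * (1/2)) with 1 by field.
        replace (Rmax (1 - 1) 0) with 0 by piece. rewrite E1, D2; auto.
      * f_equal. piece.
  - intros t ht. destruct (Rle_dec t (1/2)).
    + apply A1. unfold in01 in *; lra.
    + apply A2. unfold in01 in *; lra.
  - intros t ht. destruct (Rle_dec t (1/2)).
    + apply B1. unfold in01 in *; lra.
    + apply B2. unfold in01 in *; lra.
  - intros s hs. destruct (Rle_dec 0 (1/2)); [|lra]. rewrite Rmult_0_r. auto.
  - intros s hs. destruct (Rle_dec 1 (1/2)); [lra|].
    replace (2 * 1 - 1) with 1 by ring. auto.
Qed.

Lemma cont_concat f1 f2 : f1 1 = f2 0 -> cont01 op f1 -> cont01 op f2 ->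
  cont01 op (path_concat f1 f2).
Proof.
  intros Ef C1 C2. apply drop1.
  apply glue_t with (K1 := fun s t => f1 (Rmin (2*t) 1)) (K2 := fun s t => f2 (Rmax (2*t-1) 0)).
  - apply (comp1_cont op f1 _ C1 rc_mint).
  - apply (comp1_cont op f2 _ C2 rc_maxt).
  - intros s t hs ht hle. unfold path_concat. destruct (Rle_dec t (1/2)); [|lra].
    f_equal. piece.
  - intros s t hs ht hge. unfold path_concat. destruct (Rle_dec t (1/2)).
    + assert (t = 1/2) by lra. subst.
      replace (2 * (1/2)) with 1 by field.
      replace (Rmax (1 - 1) 0) with 0 by piece. auto.
    + f_equal. piece.
Qed.

Lemma fib_l (f g : R -> X) (x : X) t : fiber01 (path_concat f g) x t -> t <= 1/2 -> fiber01 f x (2*t).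
Proof.
  intros [ht E] hle. unfold path_concat in E. destruct (Rle_dec t (1/2)); [|lra].
  split; auto. unfold in01 in *; lra.
Qed.
Lemma fib_r (f g : R -> X) (x : X) t : fiber01 (path_concat f g) x t -> ~ t <= 1/2 -> fiber01 g x (2*t-1).
Proof.
  intros [ht E] hle. unfold path_concat in E. destruct (Rle_dec t (1/2)); [lra|].
  split; auto. unfold in01 in *; lra.
Qed.

Lemma fib_concat_inj (f g : R -> X) (x : X) :
  inj {t | fiber01 (path_concat f g) x t} ({t | fiber01 f x t} + {t | fiber01 g x t}).
Proof.
  exists (fun u : {t | fiber01 (path_concat f g) x t} => let (t, Ht) := u in
    match Rle_dec t (1/2) with
    | left h => inl (exist _ (2*t) (fib_l f g x t Ht h))
    | right h => inr (exist _ (2*t-1) (fib_r f g x t Ht h)) end).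
  intros [u Hu] [v Hv]. destruct (Rle_dec u (1/2)), (Rle_dec v (1/2)); intro E;
    try discriminate.
  - apply (f_equal (fun z => match z with inl w => proj1_sig w | inr _ => 0 end)) in E.
    simpl in E. apply sig_eq. simpl. lra.
  - apply (f_equal (fun z => match z with inr w => proj1_sig w | inl _ => 0 end)) in E.
    simpl in E. apply sig_eq. simpl. lra.
Qed.

Lemma fib_rev_inj (f : R -> X) (x : X) : inj {t | fiber01 (path_rev f) x t} {t | fiber01 f x t}.
Proof.
  assert (Hp : forall t, fiber01 (path_rev f) x t -> fiber01 f x (1 - t)).
  { intros t [ht E]. split; auto. unfold in01 in *; lra. }
  exists (fun u : {t | fiber01 (path_rev f) x t} => let (t, Ht) := u in exist (fiber01 f x) (1 - t) (Hp t Ht)).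
  intros [u Hu] [v Hv] E.
  apply (f_equal (@proj1_sig _ _)) in E. simpl in E. apply sig_eq. simpl. lra.
Qed.

Lemma fib_unit_inj (h : R -> X) x :
  (forall s t, in01 s -> in01 t -> h s = h t -> s = t) ->
  inj {t | fiber01 (fun t => h (phi t)) x t} bool.
Proof.
  intros Hh.
  exists (fun u => if Rle_dec (proj1_sig u) (1/2) then true else false).
  intros [u [hu Eu]] [v [hv Ev]]. simpl. intro E. apply sig_eq. simpl.
  assert (phi u = phi v) by (apply Hh; try apply phi_in; auto; congruence).
  unfold phi in *.
  destruct (Rle_dec u (1/2)), (Rle_dec v (1/2)); try discriminate; piece.
Qed.

End Main.
Open Scope R_scope.

Lemma rc_phi : rc2 (fun s t => phi t).
Proof. apply lip_rc2 with 2. lra. intros; apply phi_in; auto. intros; unfold phi; piece. Qed.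

Lemma phi0 : phi 0 = 0.
Proof. unfold phi; piece. Qed.
Lemma phi1 : phi 1 = 0.
Proof. unfold phi; piece. Qed.

Lemma cb_lt {T} (S : T -> Prop) A : ~ finite_type A -> inj {t | S t} A -> ~ inj A {t | S t} ->
  card_bound S A.
Proof. intros HA H1 H2. split; intro; [contradiction|]. split; auto. Qed.

Lemma cb_get {T} (S : T -> Prop) A : ~ finite_type A -> card_bound S A ->
  inj {t | S t} A /\ ~ inj A {t | S t}.
Proof. intros HA [_ H]. apply H; auto. Qed.

Theorem gen_good (X : Type) (op : (X -> Prop) -> Prop)
  (Harc : arc_connected op) (Htwo : exists x y : X, x <> y)
  (a : X) (I : (X -> Prop) -> Prop) (HI : is_ideal I)
  (A : Type) (HA : ~ finite_type A) :
  forall g, gen_loop op I A a g ->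
    exists f : R -> X, alpha_I_loop op I A f a /\ path_homotopic op f g.
Proof.
  assert (h0 : in01 0) by (unfold in01; lra). assert (h1 : in01 1) by (unfold in01; lra).
  destruct HI as [[B0 HB0] [HIU HIS]].
  intros g Hg. induction Hg as [f Hf | | f g Hf IHf Hg IHg | f Hf IHf | f g Hf IHf Hloop Hhom].
  - exists f. split; auto. apply hrefl. apply Hf.
  - destruct Htwo as [x [y Hxy]].
    assert (Hb : exists b, a <> b).
    { destruct (classic (x = a)) as [->|Hx]; eauto. }
    destruct Hb as [b Hab]. destruct (Harc a b Hab) as [h [Hc [Hi [Ha Hb]]]].
    exists (fun t => h (phi t)). split.
    + split; [split|].
      * apply drop1. apply (comp1_cont op h _ Hc rc_phi).
      * exists B0. split; auto. intros z _. apply cb_lt; auto.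
        -- eapply inj_trans. apply fib_unit_inj; auto. apply fin_into_inf; auto. apply fin_bool.
        -- intro Hz. apply HA. eapply fin_inj. eapply inj_trans. apply Hz.
           apply fib_unit_inj; auto. apply fin_bool.
      * rewrite phi0, phi1; auto.
    + exists (fun s t => h ((1 - s) * phi t)). split; [|split; [|split; [|split]]].
      * apply (comp1_cont op h _ Hc rc_unit).
      * intros t ht. f_equal. ring.
      * intros t ht. rewrite <- Ha. f_equal. ring.
      * intros s hs. rewrite phi0. f_equal. ring.
      * intros s hs. rewrite phi1. f_equal. ring.
  - destruct IHf as [f1 [[[C1 [B1 [IB1 HB1]]] [E10 E11]] Hh1]].
    destruct IHg as [f2 [[[C2 [B2 [IB2 HB2]]] [E20 E21]] Hh2]].
    exists (path_concat f1 f2). split.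
    + split; [split|split].
      * apply cont_concat; auto. congruence.
      * exists (fun x => B1 x \/ B2 x). split; auto.
        intros x Hx. apply cb_lt; auto.
        destruct (cb_get _ _ HA (HB1 x (fun h => Hx (or_introl h)))) as [P1 N1].
        destruct (cb_get _ _ HA (HB2 x (fun h => Hx (or_intror h)))) as [P2 N2].
        apply (card_core _ _ _ _ (fib_concat_inj f1 f2 x) P1 P2 N1 N2 HA).
        destruct (cb_get _ _ HA (HB1 x (fun h => Hx (or_introl h)))) as [P1 N1].
        destruct (cb_get _ _ HA (HB2 x (fun h => Hx (or_intror h)))) as [P2 N2].
        apply (card_core _ _ _ _ (fib_concat_inj f1 f2 x) P1 P2 N1 N2 HA).
      * unfold path_concat. destruct (Rle_dec 0 (1/2)); [|lra]. rewrite Rmult_0_r; auto.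
      * unfold path_concat. destruct (Rle_dec 1 (1/2)); [lra|].
        replace (2 * 1 - 1) with 1 by ring. auto.
    + apply hconcat; auto. congruence.
  - destruct IHf as [f1 [[[C1 [B1 [IB1 HB1]]] [E10 E11]] Hh1]].
    exists (path_rev f1). split.
    + split; [split|split].
      * apply cont_rev; auto.
      * exists B1. split; auto. intros x Hx.
        destruct (cb_get _ _ HA (HB1 x Hx)) as [P1 N1].
        apply cb_lt; auto.
        -- eapply inj_trans; [apply fib_rev_inj|]; auto.
        -- intro Hz. apply N1. eapply inj_trans; [apply Hz|apply fib_rev_inj].
      * unfold path_rev. rewrite Rminus_0_r. auto.
      * unfold path_rev. replace (1 - 1) with 0 by ring. auto.
    + apply hrev; auto.
  - destruct IHf as [f1 [Hf1 Hh1]]. exists f1. split; auto. eapply htrans; eauto.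
Qed.

Theorem theorem3p3 (X : Type) (op : (X -> Prop) -> Prop)
  (Htop : is_topology op) (Hhaus : hausdorff op) (Hlc : locally_compact op)
  (Harc : arc_connected op) (Htwo : exists x y : X, x <> y)
  (a : X) (I : (X -> Prop) -> Prop) (HI : is_ideal I)
  (A : Type) (HA : ~ finite_type A) :
  forall g : R -> X, is_loop op g a ->
    (gen_loop op I A a g <->
     exists f : R -> X, alpha_I_loop op I A f a /\ path_homotopic op f g).
Proof.
  intros g Hg. split.
  - intro H. apply (gen_good X op Harc Htwo a I HI A HA g H).
  - intros [f [Hf Hh]]. apply gen_homot with f; auto. apply gen_base; auto.
Qed.
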